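(* Let $X:=\{x_i\}_{i\in[n]}$ be any sequence in $\mathbb{R}^d$, let $k\ge 2$ and $s\ge k$ be integers, draw indices $\{i_j\}_{j\in[s]}$ uniformly from $[n]$ either independently with replacement, or without replacement (in which case $s\le n$), and put $Y:=\{x_{i_j}\}_{j\in[s]}$. Then \[\mathbb{E}\operatorname{SDP}(Y,k)\le \mathbb{E}\operatorname{IP}(Y,k)\le \operatorname{IP}(X,k).\]
   Context: For a tuple $Y=\{y_j\}_{j\in[m]}$ in $\mathbb{R}^d$ (repeated points allowed) and $m\ge k$: $\Pi(m,k)$ is the set of partitions of $[m]$ into $k$ nonempty sets; $c_S:=\frac1{|S|}\sum_{j\in S}y_j$; $\operatorname{IP}(Y,k):=\min_{\Gamma\in\Pi(m,k)}\frac1m\sum_{S\in\Gamma}\sum_{j\in S}\|y_j-c_S\|^2$ (the normalized $k$-means value). $D_Y\in\mathbb{R}^{m\times m}$ has entries $\|y_i-y_j\|^2$, and $\operatorname{SDP}(Y,k):=\min\{\frac1{2m}\operatorname{tr}(D_YZ): Z\in\mathbb{R}^{m\times m},\ Z\mathbf 1=\mathbf 1,\ \operatorname{tr}Z=k,\ Z\ge0\text{ entrywise},\ Z\succeq0\}$ (the normalized Peng–Wei relaxation value). *)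

(* Defs.v *)
From HB Require Import structures.
From mathcomp Require Import all_boot all_order all_algebra.
From mathcomp Require Import boolp classical_sets reals.
Set Implicit Arguments. Unset Strict Implicit. Unset Printing Implicit Defensive.
Import Order.TTheory GRing.Theory Num.Theory.
Local Open Scope ring_scope.

Section KMeans.
Variable R : realType.
Variable d : nat.

Definition sqnorm (v : 'rV[R]_d) : R := \sum_(i < d) (v 0 i) ^+ 2.

Definition centroid (m : nat) (Y : 'I_m -> 'rV[R]_d) (S : {set 'I_m}) : 'rV[R]_d :=
  (#|S|%:R)^-1 *: \sum_(j in S) Y j.

Definition kmeans_cost (m : nat) (Y : 'I_m -> 'rV[R]_d) (G : {set {set 'I_m}}) : R :=
  (m%:R)^-1 * \sum_(S in G) \sum_(j in S) sqnorm (Y j - centroid Y S).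

(* Pi(m,k): partitions of [m] into k nonempty blocks
   (mathcomp's [partition] already requires blocks to be nonempty) *)
Definition kpartitions (m k : nat) : set {set {set 'I_m}} :=
  fun G => finset.partition G [set: 'I_m]%SET /\ #|G| = k.

(* IP(Y,k): minimum (= infimum of this finite nonempty set when m >= k) *)
Definition IP (m : nat) (Y : 'I_m -> 'rV[R]_d) (k : nat) : R :=
  inf (fun v => exists G, @kpartitions m k G /\ v = kmeans_cost Y G).

Definition distmx (m : nat) (Y : 'I_m -> 'rV[R]_d) : 'M[R]_m :=
  \matrix_(i, j) sqnorm (Y i - Y j).

Definition psd (m : nat) (Z : 'M[R]_m) : Prop :=
  Z^T = Z /\ forall v : 'cV[R]_m, 0 <= (v^T *m Z *m v) 0 0.

Definition pw_feasible (m k : nat) (Z : 'M[R]_m) : Prop :=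
  [/\ Z *m (const_mx 1 : 'cV[R]_m) = const_mx 1, \tr Z = k%:R,
      (forall i j, 0 <= Z i j) & psd Z].

(* SDP(Y,k): minimum (written as infimum; the feasible set is compact and nonempty) *)
Definition SDP (m : nat) (Y : 'I_m -> 'rV[R]_d) (k : nat) : R :=
  inf (fun v => exists Z, @pw_feasible m k Z /\ v = (2 * m%:R)^-1 * \tr (distmx Y *m Z)).

Definition E_with (n s : nat) (F : {ffun 'I_s -> 'I_n} -> R) : R :=
  (#|{ffun 'I_s -> 'I_n}|%:R)^-1 * \sum_(f : {ffun 'I_s -> 'I_n}) F f.

(* Expectation over i_1..i_s drawn uniformly without replacement
   (uniform over injective index maps [s] -> [n]) *)
Definition E_without (n s : nat) (F : {ffun 'I_s -> 'I_n} -> R) : R :=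
  (#|[set f : {ffun 'I_s -> 'I_n} | injectiveb f]|%:R)^-1 *
  \sum_(f : {ffun 'I_s -> 'I_n} | injectiveb f) F f.

Definition subsample (n s : nat) (X : 'I_n -> 'rV[R]_d) (f : {ffun 'I_s -> 'I_n}) :
  'I_s -> 'rV[R]_d := fun j => X (f j).

End KMeans.

Arguments E_with {R} n s F.
Arguments E_without {R} n s F.

(* Main.v *)
Require Import Defs.
From HB Require Import structures.
From mathcomp Require Import all_boot all_order all_algebra.
From mathcomp Require Import boolp classical_sets reals.
From mathcomp Require Import ring lra.
Import Order.TTheory GRing.Theory Num.Theory.
Local Open Scope ring_scope.
Set Implicit Arguments. Unset Strict Implicit. Unset Printing Implicit Defensive.

Section A.
Variable R : realType.

Lemma sq_expand (I : finType) (P : pred I) (a : I -> R) (c : R) :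
  \sum_(j | P j) (a j - c) ^+ 2 =
  \sum_(j | P j) a j ^+ 2 - 2 * c * \sum_(j | P j) a j + (#|P|%:R) * c ^+ 2.
Proof.
rewrite (eq_bigr (fun j => a j ^+ 2 - (2 * c) * a j + c ^+ 2)); last by move=> j _; ring.
rewrite !big_split /= sumrN -mulr_sumr sumr_const.
rewrite mulr_natl; ring. Qed.

Lemma sum_card0 (I : finType) (P : pred I) (F : I -> R) :
  #|P| = 0%N -> \sum_(j | P j) F j = 0.
Proof. move=> /card0_eq h; rewrite big_pred0 // => j; exact: h. Qed.

Lemma mean_min (I : finType) (P : pred I) (a : I -> R) (c : R) :
  \sum_(j | P j) (a j - (#|P|%:R)^-1 * \sum_(i | P i) a i) ^+ 2 <=
  \sum_(j | P j) (a j - c) ^+ 2.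
Proof.
rewrite !sq_expand.
have [h0|hpos] := posnP #|P|.
  by rewrite !(sum_card0 _ h0) h0 !mul0r !mulr0.
set N := #|P|%:R; set A := \sum_(i | P i) a i; set Q := \sum_(i | P i) a i ^+ 2.
have hN : N != 0 by rewrite pnatr_eq0 -lt0n.
rewrite -subr_ge0.
have -> : Q - 2 * c * A + N * c ^+ 2 - (Q - 2 * (N^-1 * A) * A + N * (N^-1 * A) ^+ 2)
  = N * (c - N^-1 * A) ^+ 2 by field.
by rewrite mulr_ge0 ?ler0n ?sqr_ge0.
Qed.

Lemma pair_sum (I : finType) (P : pred I) (a : I -> R) :
  \sum_(i | P i) \sum_(j | P j) (a i - a j) ^+ 2 =
  2 * #|P|%:R * \sum_(j | P j) (a j - (#|P|%:R)^-1 * \sum_(i | P i) a i) ^+ 2.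
Proof.
have [h0|hpos] := posnP #|P|.
  by rewrite !(sum_card0 _ h0) mulr0.
under eq_bigr => i _ do (under eq_bigr => j _ do rewrite -sqrrN opprB; rewrite sq_expand).
rewrite sq_expand !big_split /= sumrN sumr_const -!mulr_suml -mulr_sumr.
set N := #|P|%:R; set A := \sum_(i | P i) a i; set Q := \sum_(i | P i) a i ^+ 2.
have hN : N != 0 by rewrite pnatr_eq0 -lt0n.
rewrite mulr_natl.
rewrite -mulr_sumr -/Q -[Q *+ _]mulr_natr -[A *+ 2]mulr_natr -/N. field; exact: hN. Qed.
End A.
Section B.
Variable R : realType.
Variable d : nat.

Lemma centroidE m (Y : 'I_m -> 'rV[R]_d) S i :
  centroid Y S 0 i = (#|S|%:R)^-1 * \sum_(j in S) Y j 0 i.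
Proof. by rewrite /centroid !mxE summxE. Qed.

Lemma sqnorm_ge0 (v : 'rV[R]_d) : 0 <= sqnorm v.
Proof. by apply: sumr_ge0 => i _; apply: sqr_ge0. Qed.

Lemma block_min m (Y : 'I_m -> 'rV[R]_d) (S : {set 'I_m}) c :
  \sum_(j in S) sqnorm (Y j - centroid Y S) <= \sum_(j in S) sqnorm (Y j - c).
Proof.
rewrite /sqnorm (exchange_big _ _ _ (fun j => j \in S)) [X in _ <= X](exchange_big _ _ _ (fun j => j \in S)) /=.
apply: ler_sum => i _.
under eq_bigr => j _ do rewrite !mxE summxE.
rewrite [X in _ <= X](eq_bigr (fun j => (Y j 0 i - c 0 i)^+2)); last by move=> j _; rewrite !mxE.
exact: (mean_min (mem S) (fun j => Y j 0 i) (c 0 i)).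
Qed.

Lemma block_pair m (Y : 'I_m -> 'rV[R]_d) (S : {set 'I_m}) :
  \sum_(i in S) \sum_(j in S) sqnorm (Y i - Y j) =
  2 * #|S|%:R * \sum_(j in S) sqnorm (Y j - centroid Y S).
Proof.
rewrite /sqnorm.
under eq_bigr => i _ do rewrite (exchange_big _ _ _ (fun j => j \in S)) /=.
rewrite (exchange_big _ _ _ (fun j => j \in S)) /=.
rewrite (exchange_big _ _ _ (fun j => j \in S)) /= mulr_sumr.
apply: eq_bigr => l _.
under eq_bigr => i _ do under eq_bigr => j _ do rewrite !mxE.
under [in RHS]eq_bigr => j _ do rewrite !mxE summxE.
exact: (pair_sum (mem S) (fun j => Y j 0 l)).
Qed.
End B.
Section C.
Variable R : realType.
Variable d m : nat.
Variable Y : 'I_m -> 'rV[R]_d.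

Lemma sum_block (G : {set {set 'I_m}}) (hG : finset.partition G [set: 'I_m]) i (F : {set 'I_m} -> R) :
  \sum_(S in G) (i \in S)%:R * F S = F (finset.pblock G i).
Proof.
have iG : i \in finset.cover G by rewrite (finset.cover_partition hG) inE.
have PG := finset.pblock_mem iG.
have tiG : finset.trivIset G by case/and3P: hG.
rewrite (bigD1 (finset.pblock G i)) //= finset.mem_pblock iG mul1r big1 ?addr0 // => S /andP[SG nS].
case: (boolP (i \in S)) => iS; last by rewrite mul0r.
by rewrite (finset.def_pblock tiG SG iS) eqxx in nS.
Qed.

Lemma sum_ind (F : 'I_m -> R) (S : {set 'I_m}) :
  \sum_i (i \in S)%:R * F i = \sum_(i in S) F i.
Proof.
by rewrite [RHS]big_mkcond; apply: eq_bigr => i _; case: (i \in S); rewrite ?mul1r ?mul0r.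
Qed.

Lemma sum_ind1 (S : {set 'I_m}) : \sum_i (i \in S)%:R = #|S|%:R :> R.
Proof.
rewrite (eq_bigr (fun i => (i \in S)%:R * 1)); last by move=> i _; rewrite mulr1.
by rewrite sum_ind sumr_const.
Qed.

Lemma block_card (G : {set {set 'I_m}}) (hG : finset.partition G [set: 'I_m]) S :
  S \in G -> #|S|%:R != 0 :> R.
Proof.
move=> SG; rewrite pnatr_eq0 -lt0n card_gt0; apply/negP => /eqP S0.
by case/and3P: hG => _ _; rewrite -S0 SG.
Qed.

Definition Zmx (G : {set {set 'I_m}}) : 'M[R]_m :=
  \matrix_(i, j) \sum_(S in G) (#|S|%:R)^-1 * ((i \in S)%:R * (j \in S)%:R).

Lemma Z_feasible G k : finset.partition G [set: 'I_m] -> #|G| = k -> pw_feasible k (Zmx G).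
Proof.
move=> hG cG; split.
- apply/matrixP => i j; rewrite !mxE.
  under eq_bigr => l _ do rewrite !mxE mulr1.
  rewrite exchange_big /=.
  transitivity (\sum_(S in G) (i \in S)%:R * (1:R)); last exact: (sum_block hG i (fun _ => 1)).
  apply: eq_bigr => S SG.
  under eq_bigr => l _ do rewrite mulrA.
  rewrite -mulr_sumr sum_ind1 mulrAC mulVf ?(block_card hG SG) //.
  by rewrite mul1r mulr1.
- rewrite /mxtrace.
  under eq_bigr => i _ do rewrite mxE.
  rewrite exchange_big /= -cG -sum1_card natr_sum.
  apply: eq_bigr => S SG.
  rewrite (eq_bigr (fun i => #|S|%:R^-1 * (i \in S)%:R)); last first.
    by move=> i _; case: (i \in S); rewrite ?mulr1 ?mulr0.
  by rewrite -mulr_sumr sum_ind1 mulVf ?(block_card hG SG).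
- move=> i j; rewrite mxE; apply: sumr_ge0 => S _.
  by rewrite !mulr_ge0 ?invr_ge0 ?ler0n.
- split.
    apply/matrixP => i j; rewrite !mxE.
    by apply: eq_bigr => S _; rewrite (mulrC (j \in S)%:R).
  move=> v.
  have -> : (v^T *m Zmx G *m v) 0 0 =
     \sum_(S in G) (#|S|%:R)^-1 * (\sum_i (i \in S)%:R * v i 0) ^+ 2.
    rewrite mxE.
    under eq_bigr => j _ do rewrite mxE mulr_suml.
    under eq_bigr => j _ do under eq_bigr => i _ do rewrite !mxE mulr_sumr mulr_suml.
    under eq_bigr => j _ do rewrite exchange_big /=.
    rewrite exchange_big /=; apply: eq_bigr => S _.
    rewrite expr2 mulr_suml mulr_sumr; apply: eq_bigr => j _.
    rewrite !mulr_sumr; apply: eq_bigr => i _.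
    ring.
  apply: sumr_ge0 => S _; by rewrite mulr_ge0 ?invr_ge0 ?ler0n ?sqr_ge0.
Qed.

Lemma Z_value G : finset.partition G [set: 'I_m] ->
  (2 * m%:R)^-1 * \tr (distmx Y *m Zmx G) = kmeans_cost Y G.
Proof.
move=> hG.
have -> : \tr (distmx Y *m Zmx G) =
   2 * \sum_(S in G) \sum_(j in S) sqnorm (Y j - centroid Y S).
  rewrite /mxtrace.
  under eq_bigr => i _ do rewrite mxE.
  under eq_bigr => i _ do under eq_bigr => j _ do rewrite !mxE mulr_sumr.
  under eq_bigr => i _ do rewrite exchange_big /=.
  rewrite exchange_big /= mulr_sumr; apply: eq_bigr => S SG.
  transitivity (#|S|%:R^-1 * \sum_(i in S) \sum_(j in S) sqnorm (Y i - Y j)).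
    rewrite -sum_ind mulr_sumr; apply: eq_bigr => i _.
    rewrite -sum_ind !mulr_sumr; apply: eq_bigr => j _.
    ring.
  rewrite block_pair.
  have hN := block_card hG SG.
  by field.
rewrite /kmeans_cost invfM mulrA -[_^-1 * _ * 2]mulrA [_^-1 * 2]mulrC mulrA.
by rewrite mulVf ?mul1r // pnatr_eq0.
Qed.
End C.
Section D.
Variable R : realType.
Variable d m : nat.
Variable Y : 'I_m -> 'rV[R]_d.

Definition acost (T : finType) (a : 'I_m -> T) (c : T -> 'rV[R]_d) : R :=
  (m%:R)^-1 * \sum_j sqnorm (Y j - c (a j)).

Lemma sum_setT (F : 'I_m -> R) : \sum_(j in [set: 'I_m]) F j = \sum_j F j.
Proof. by apply: eq_bigl => j; rewrite inE. Qed.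

Lemma assign_base (T : finType) (a : 'I_m -> T) (c : T -> 'rV[R]_d) :
  exists G, @kpartitions m #|a @: [set: 'I_m]| G /\ kmeans_cost Y G <= acost a c.
Proof.
pose G := [set [set j | a j == t] | t in a @: [set: 'I_m]].
have coverG : finset.cover G = [set: 'I_m].
  apply/setP => x; rewrite inE /finset.cover; apply/bigcupP.
  exists [set j | a j == a x]; last by rewrite inE.
  by apply: imset_f; apply: imset_f; rewrite inE.
have tiG : finset.trivIset G.
  apply/finset.trivIsetP => A B /imsetP[t _ ->] /imsetP[u _ ->] neq.
  rewrite -setI_eq0; apply/eqP/setP => x; rewrite !inE.
  apply/negP => /andP[/eqP h1 /eqP h2].
  by move: neq; rewrite -h1 -h2 eqxx.
have pG : finset.partition G [set: 'I_m].
  apply/and3P; split => //; first by apply/eqP.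
  apply/negP => /imsetP[t /imsetP[x _ ->] h].
  have : x \in (finset.set0 : {set 'I_m}) by rewrite h inE.
  by rewrite inE.
exists G; split.
  split => //.
  rewrite card_in_imset // => t u /imsetP[x _ ->] /imsetP[y _ ->] h.
  have : x \in [set j | a j == a y] by rewrite -h inE.
  by rewrite inE => /eqP.
rewrite /kmeans_cost /acost; apply: ler_wpM2l; first by rewrite invr_ge0 ler0n.
rewrite -sum_setT -coverG finset.big_trivIset //.
apply: ler_sum => S /imsetP[t _ ->].
rewrite [X in _ <= X](eq_bigr (fun j => sqnorm (Y j - c t))); first exact: block_min.
by move=> j; rewrite inE => /eqP ->.
Qed.

Lemma assign_gen r : forall (T : finType) (a : 'I_m -> T) (c : T -> 'rV[R]_d) k,
  (#|a @: [set: 'I_m]| + r = k)%N -> (k <= m)%N ->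
  exists G, @kpartitions m k G /\ kmeans_cost Y G <= acost a c.
Proof.
elim: r => [|r IH] T a c k.
  by rewrite addn0 => <- _; apply: assign_base.
move=> hk km.
have [/existsP[j1 /existsP[j2 /andP[neq /eqP eqa]]] | noex] :=
  boolP [exists j1, exists j2, (j1 != j2) && (a j1 == a j2)]; last first.
  have inj : injective a.
    move=> x y h; apply/eqP; apply: contraNT noex => nxy.
    by apply/existsP; exists x; apply/existsP; exists y; rewrite nxy h eqxx.
  move: hk; rewrite card_imset // cardsT card_ord => hk.
  by move: km; rewrite -hk; rewrite addnS ltnNge leq_addr.
pose a' := fun j => if j == j1 then None else Some (a j).
pose c' := fun o : option T => if o is Some t then c t else Y j1.
have img : a' @: [set: 'I_m] = None |: [set Some t | t in a @: [set: 'I_m]].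
  apply/setP => o; rewrite !inE; apply/imsetP/orP.
    move=> [x _ ->]; rewrite /a'; case: (x == j1); first by left.
    by right; apply: imset_f; apply: imset_f; rewrite inE.
  case=> [/eqP -> | /imsetP[t /imsetP[x _ ->] ->]].
    by exists j1; rewrite ?inE // /a' eqxx.
  have [xj1 | xn] := eqVneq x j1.
    exists j2; first by rewrite inE.
    by rewrite /a' eq_sym (negbTE neq) xj1 eqa.
  by exists x; rewrite ?inE // /a' (negbTE xn).
have card' : #|a' @: [set: 'I_m]| = (#|a @: [set: 'I_m]|).+1.
  rewrite img cardsU1 card_imset; last by move=> x y [].
  suff -> : None \notin [set Some t | t in a @: [set: 'I_m]] by [].
  by apply/imsetP => -[t _].
have [G [kG cG]] := IH _ a' c' k ltac:(by rewrite card' addSnnS) km.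
exists G; split => //; apply: (le_trans cG).
rewrite /acost; apply: ler_wpM2l; first by rewrite invr_ge0 ler0n.
apply: ler_sum => j _; rewrite /a'.
case: (eqVneq j j1) => [->|_] /=; last by [].
by rewrite subrr /sqnorm big1 ?sqnorm_ge0 // => i _; rewrite mxE expr0n.
Qed.

Lemma assign_le (T : finType) (a : 'I_m -> T) (c : T -> 'rV[R]_d) k :
  (#|a @: [set: 'I_m]| <= k)%N -> (k <= m)%N ->
  exists G, @kpartitions m k G /\ kmeans_cost Y G <= acost a c.
Proof. by move=> h1 h2; apply: (@assign_gen (k - #|a @: [set: 'I_m]|)) => //; rewrite subnKC. Qed.

Lemma kcost_ge0 G : 0 <= kmeans_cost Y G.
Proof.
by rewrite /kmeans_cost mulr_ge0 ?invr_ge0 ?ler0n //; apply: sumr_ge0 => S _; apply: sumr_ge0 => j _; apply: sqnorm_ge0.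
Qed.

Lemma IP_le G k : @kpartitions m k G -> IP Y k <= kmeans_cost Y G.
Proof.
move=> kG; rewrite /IP.
have hl : has_lbound (fun v => exists G, @kpartitions m k G /\ v = kmeans_cost Y G).
  by exists 0 => v [G' [_ ->]]; apply: kcost_ge0.
by apply: (ge_inf hl); exists G.
Qed.

Lemma IP_le_acost (T : finType) (a : 'I_m -> T) (c : T -> 'rV[R]_d) k :
  (#|a @: [set: 'I_m]| <= k)%N -> (k <= m)%N -> IP Y k <= acost a c.
Proof.
move=> h1 h2; have [G [kG cG]] := assign_le c h1 h2.
exact: le_trans (IP_le kG) cG.
Qed.

Lemma kpart_exists k : (1 <= k)%N -> (k <= m)%N -> exists G, @kpartitions m k G.
Proof.
move=> k1 km.
have h1 : (#|(fun _ : 'I_m => tt) @: [set: 'I_m]| <= k)%N.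
  by apply: leq_trans k1; apply: leq_trans (max_card _) _; rewrite card_unit.
have [G [kG _]] := assign_le (fun _ => (0 : 'rV[R]_d)) h1 km.
by exists G.
Qed.

Lemma SDP_le_IP k : (1 <= k)%N -> (k <= m)%N -> SDP Y k <= IP Y k.
Proof.
move=> k1 km; rewrite /IP; apply: lb_le_inf.
  by have [G kG] := kpart_exists k1 km; exists (kmeans_cost Y G); exists G.
move=> v [G [kG ->]].
case: kG => pG cG.
rewrite -(Z_value Y pG) /SDP.
have hl : has_lbound (fun v => exists Z, @pw_feasible R m k Z /\
                 v = (2 * m%:R)^-1 * \tr (distmx Y *m Z)).
  exists 0 => w [Z [[_ _ Zge0 _] ->]].
  rewrite mulr_ge0 ?invr_ge0 ?mulr_ge0 ?ler0n //.
  rewrite /mxtrace; apply: sumr_ge0 => i _; rewrite mxE; apply: sumr_ge0 => j _.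
  by rewrite mxE mulr_ge0 ?sqnorm_ge0.
apply: (ge_inf hl); exists (@Zmx R m G); split => //.
exact: Z_feasible.
Qed.
End D.

Section E.
Variable R : realType.
Variable n' : nat.
Local Notation n := n'.+1.

Lemma avg_marg s (P : pred {ffun 'I_s -> 'I_n})
  (hP : forall (t : 'I_n) (f : {ffun 'I_s -> 'I_n}), P [ffun j => f j + t] = P f) (g : 'I_n -> R) j :
  n%:R * \sum_(f | P f) g (f j) = #|P|%:R * \sum_i g i.
Proof.
have e1 : forall t : 'I_n, \sum_(f | P f) g (f j) = \sum_(f | P f) g (f j + t).
  move=> t.
  have hinj : injective (fun f : {ffun 'I_s -> 'I_n} => [ffun j => f j + t]).
    move=> f1 f2 /ffunP h; apply/ffunP => x; move: (h x); rewrite !ffunE.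
    exact: addIr.
  rewrite (reindex_inj hinj) /=; apply: eq_big => f; first by rewrite hP.
  by rewrite ffunE.
transitivity (\sum_(t : 'I_n) \sum_(f | P f) g (f j + t)).
  rewrite -(eq_bigr _ (fun t _ => e1 t)) sumr_const card_ord.
  by rewrite mulr_natl.
rewrite exchange_big /=.
rewrite (eq_bigr (fun f => \sum_i g i)); first by rewrite sumr_const mulr_natl.
move=> f _.
by rewrite [RHS](reindex_inj (addrI (f j))).
Qed.

Definition Egen s (P : pred {ffun 'I_s -> 'I_n}) (F : {ffun 'I_s -> 'I_n} -> R) :=
  (#|P|%:R)^-1 * \sum_(f | P f) F f.

Lemma Egen_le s (P : pred {ffun 'I_s -> 'I_n}) F1 F2 :
  (forall f, P f -> F1 f <= F2 f) -> Egen P F1 <= Egen P F2.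
Proof.
move=> h; rewrite /Egen; apply: ler_wpM2l; first by rewrite invr_ge0 ler0n.
exact: ler_sum.
Qed.

Lemma cost_pblock d (X : 'I_n -> 'rV[R]_d) G : finset.partition G [set: 'I_n] ->
  kmeans_cost X G = (n%:R)^-1 * \sum_i sqnorm (X i - centroid X (finset.pblock G i)).
Proof.
move=> pG; rewrite /kmeans_cost; congr (_ * _).
have tiG : finset.trivIset G by case/and3P: pG.
rewrite -sum_setT -(finset.cover_partition pG) finset.big_trivIset //.
apply: eq_bigr => S SG; apply: eq_bigr => i iS.
by rewrite (finset.def_pblock tiG SG iS).
Qed.

Lemma Egen_IP_le s k d (X : 'I_n -> 'rV[R]_d) (P : pred {ffun 'I_s -> 'I_n})
  (hP : forall (t : 'I_n) (f : {ffun 'I_s -> 'I_n}), P [ffun j => f j + t] = P f)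
  (hpos : (0 < #|P|)%N) (k1 : (1 <= k)%N) (ks : (k <= s)%N) G :
  @kpartitions n k G ->
  Egen P (fun f => IP (subsample X f) k) <= kmeans_cost X G.
Proof.
move=> [pG cG].
pose g i := sqnorm (X i - centroid X (finset.pblock G i)).
apply: (le_trans (Egen_le (F2 := fun f => acost (subsample X f) (fun j => finset.pblock G (f j)) (centroid X)) _)).
  move=> f _; apply: IP_le_acost => //.
  rewrite -cG; apply: subset_leq_card; apply/fintype.subsetP => S /imsetP[j _ ->].
  by apply: finset.pblock_mem; rewrite (finset.cover_partition pG) inE.
rewrite (cost_pblock _ pG) /Egen /acost -/g.
have hs : (s%:R : R) != 0 by rewrite pnatr_eq0 -lt0n; apply: leq_trans ks.
have hP0 : (#|P|%:R : R) != 0 by rewrite pnatr_eq0 -lt0n.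
have hn : (n%:R : R) != 0 by rewrite pnatr_eq0.
rewrite -mulr_sumr exchange_big /=.
rewrite (eq_bigr (fun j => #|P|%:R * (n%:R^-1 * \sum_i g i))); last first.
  move=> j _.
  have := avg_marg hP g j.
  rewrite /subsample /g => h.
  apply: (mulfI hn); rewrite h; field; by rewrite nat1r pnatr_eq0.
rewrite sumr_const card_ord -mulr_natl.
rewrite -/g le_eqVlt; apply/orP; left; apply/eqP; field.
by rewrite nat1r pnatr_eq0 hs hP0.
Qed.
End E.

Lemma both (R : realType) d n' k s (X : 'I_n'.+1 -> 'rV[R]_d) (P : pred {ffun 'I_s -> 'I_n'.+1})
  (hP : forall (t : 'I_n'.+1) (f : {ffun 'I_s -> 'I_n'.+1}), P [ffun j => f j + t] = P f)
  (hpos : (0 < #|P|)%N) : (1 <= k)%N -> (k <= s)%N -> (k <= n'.+1)%N ->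
  Egen P (fun f => SDP (subsample X f) k) <= Egen P (fun f => IP (subsample X f) k)
  /\ Egen P (fun f => IP (subsample X f) k) <= IP X k.
Proof.
move=> k1 ks kn; split.
  by apply: Egen_le => f _; apply: SDP_le_IP.
apply: lb_le_inf.
  by have [G kG] := kpart_exists X k1 kn; exists (kmeans_cost X G); exists G.
by move=> v [G [kG ->]]; apply: Egen_IP_le.
Qed.

Unset Implicit Arguments.
Set Strict Implicit.

Theorem lemma3 (R : realType) (d n k s : nat) (X : 'I_n -> 'rV[R]_d) :
  (2 <= k)%N -> (k <= s)%N -> (k <= n)%N ->
  (* sampling with replacement *)
  (E_with n s (fun f => SDP (subsample X f) k) <= E_with n s (fun f => IP (subsample X f) k)
   /\ E_with n s (fun f => IP (subsample X f) k) <= IP X k)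
  /\
  (* sampling without replacement, s <= n *)
  ((s <= n)%N ->
   E_without n s (fun f => SDP (subsample X f) k) <= E_without n s (fun f => IP (subsample X f) k)
   /\ E_without n s (fun f => IP (subsample X f) k) <= IP X k).
Proof.
move=> k2 ks kn.
case: n X kn => [|n'] X kn; first by move: (leq_trans k2 kn).
have k1 : (1 <= k)%N by apply: ltnW.
split.
  have := @both R d n' k s X predT (fun _ _ => erefl) _ k1 ks kn.
  rewrite /Egen /E_with.
  apply.
  by apply/card_gt0P; exists [ffun=> ord0].
move=> sn.
have := @both R d n' k s X (fun f => injectiveb f) _ _ k1 ks kn.
rewrite /Egen /E_without cardsE.
apply.
  move=> t f; apply/injectiveP/injectiveP => h x y.
    move=> e; apply: h; rewrite !ffunE; rewrite e; done.
  by rewrite !ffunE => /addIr; apply: h.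
apply/card_gt0P; exists [ffun j => widen_ord sn j].
rewrite unfold_in; apply/injectiveP => x y; rewrite !ffunE => /(congr1 val) /= h.
exact: val_inj.
Qed.
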